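(* Let $s=s_1\cdots s_n$ be a normalized fully ternary string of length $n$ with $s_n=2$ and $s\neq 0212$. Then $d_{\rm s}(s)\le n-2$. (The string $0212$ satisfies $d_{\rm s}(0212)=3$.)
   Context: Strings are finite words over $\{0,1,2,\dots\}$. A string is \emph{normalized} if no two adjacent symbols are equal; the \emph{normalization} of a string replaces every maximal run of identical symbols by a single copy. A string is \emph{fully $k$-ary} if the set of symbols occurring in it is exactly $\{0,\dots,k-1\}$; fully ternary means fully $3$-ary. For a normalized string $s=s_1\cdots s_n$ and $1\le i\le n$, the flip $f^{(i)}(s)$ is the normalization of $s_i\cdots s_1 s_{i+1}\cdots s_n$. The sorting distance $d_{\rm s}(s)$ of a normalized fully $k$-ary string $s$ is the minimum number of flips needed to transform $s$ into $01\cdots(k-1)$. *)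

(* Defs.v *)
From mathcomp Require Import all_boot.
Set Implicit Arguments. Unset Strict Implicit. Unset Printing Implicit Defensive.

Fixpoint normalize (s : seq nat) : seq nat :=
  match s with
  | [::] => [::]
  | x :: t =>
      match normalize t with
      | [::] => [:: x]
      | y :: u => if x == y then y :: u else x :: y :: u
      end
  end.

Definition normalized (s : seq nat) : bool := sorted (fun a b => a != b) s.

Definition fully_kary (k : nat) (s : seq nat) : Prop :=
  forall x : nat, (x \in s) = (x < k).

Definition flip (i : nat) (s : seq nat) : seq nat :=
  normalize (rev (take i s) ++ drop i s).

Fixpoint reach_in (k : nat) (s t : seq nat) : Prop :=
  match k with
  | 0 => s = t
  | k'.+1 => exists i : nat, 1 <= i <= size s /\ reach_in k' (flip i s) t
  end.

Definition sorted_string (k : nat) : seq nat := iota 0 k.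

Definition sorting_distance (k : nat) (s : seq nat) (d : nat) : Prop :=
  reach_in d s (sorted_string k) /\
  forall d' : nat, reach_in d' s (sorted_string k) -> d <= d'.

(* Main.v *)
Require Import Defs.
From mathcomp Require Import all_boot zify.
Set Implicit Arguments. Unset Strict Implicit. Unset Printing Implicit Defensive.

Fixpoint alt (a b k : nat) : seq nat := if k is k'.+1 then a :: alt b a k' else [::].

Lemma alt_rcons a b k : alt a b k.+1 = rcons (alt a b k) (if odd k then b else a).
Proof.
elim: k a b => [//|k IH] a b.
change (alt a b k.+2) with (a :: alt b a k.+1); rewrite IH /=.
by case: (odd k).
Qed.

Lemma rev_alt_odd a b k : odd k -> rev (alt a b k) = alt a b k.
Proof.
move=> ok; rewrite -(odd_double_half k) ok add1n.
elim: (k./2) => [//|j IH].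
have E : alt a b (j.+1).*2.+1 = rcons (rcons (alt a b j.*2.+1) b) a.
  by rewrite doubleS alt_rcons alt_rcons /= odd_double.
by rewrite {1}doubleS /= rev_cons rev_cons IH -E.
Qed.

Lemma normalize_cons x t : normalize (x :: t) =
  match normalize t with [::] => [:: x] | y :: u => if x == y then y :: u else x :: y :: u end.
Proof. by []. Qed.

Lemma normalize_head x t : exists u, normalize (x :: t) = x :: u.
Proof.
rewrite normalize_cons; case: (normalize t) => [|y u]; first by exists [::].
by case: eqP => [->|_]; eauto.
Qed.

Lemma normalize_xx x t : normalize (x :: x :: t) = normalize (x :: t).
Proof. by rewrite normalize_cons; have [u ->] := normalize_head x t; rewrite eqxx. Qed.

Lemma normalize_cat a t1 t2 : normalize t1 = normalize t2 -> normalize (a ++ t1) = normalize (a ++ t2).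
Proof. by elim: a => [//|x a IH] H; rewrite !cat_cons !(normalize_cons x) IH. Qed.

Lemma normalize_id s : normalized s -> normalize s = s.
Proof.
elim: s => [//|x t IH] H; rewrite normalize_cons IH; last exact: path_sorted H.
by case: t H {IH} => [//|y u] /= /andP [/negbTE -> _].
Qed.

Lemma normalize_xx_id a x t : normalized (a ++ x :: t) -> normalize (a ++ x :: x :: t) = a ++ x :: t.
Proof. move=> H; rewrite (normalize_cat a (normalize_xx x t)); exact: normalize_id. Qed.

Lemma flip_cat p q : flip (size p) (p ++ q) = normalize (rev p ++ q).
Proof. by rewrite /flip take_size_cat // drop_size_cat. Qed.

Lemma flip_catn n p q : size p = n -> flip n (p ++ q) = normalize (rev p ++ q).
Proof. by move=> <-; apply: flip_cat. Qed.

Lemma normalized_alt a b m : a != b -> normalized (alt a b m).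
Proof.
elim: m a b => [//|m IH] a b ab.
case: m IH => [//|m] IH /=. rewrite ab /=.
have := IH b a; rewrite eq_sym ab => /(_ isT) //.
Qed.

Fixpoint reachb k s t : bool :=
  if k is k'.+1 then has (fun i => reachb k' (flip i s) t) (iota 1 (size s)) else s == t.

Lemma reachbP k s t : reflect (reach_in k s t) (reachb k s t).
Proof.
elim: k s => [|k IH] s /=; first exact: eqP.
apply: (iffP hasP) => [[i Hi /IH Hr] | [i [Hi /IH Hr]]]; exists i => //.
  by move: Hi; rewrite mem_iota add1n ltnS.
by rewrite mem_iota add1n ltnS.
Qed.

Lemma normalized_cons_alt u a b m : u != a -> a != b -> normalized (u :: alt a b m.+1).
Proof. move=> ua ab; apply/andP; split => //; exact: (normalized_alt m.+1 ab). Qed.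

Lemma last_alt x a b m : last x (alt a b m.+1) = if odd m then b else a.
Proof. by rewrite alt_rcons last_rcons. Qed.

Lemma normalized_altcat a b m c d : a != b -> normalized (c :: d) ->
  (if odd m then b else a) != c -> normalized (alt a b m.+1 ++ c :: d).
Proof.
move=> ab ncd lc.
change (alt a b m.+1 ++ c :: d) with (a :: (alt b a m ++ c :: d)).
rewrite /normalized /= cat_path; apply/andP; split.
  exact: (normalized_alt m.+1 ab).
have -> : last a (alt b a m) = last 0 (alt a b m.+1) by [].
by rewrite last_alt /= lc.
Qed.

Lemma Pchain k : reach_in k.+1
  (alt (if odd k then 1 else 2) (if odd k then 2 else 1) k.+2 ++ [:: 0; 2]) [:: 0; 1; 2].
Proof.
elim: k => [|k IH]; first by exists 3.
exists 2; split; first by rewrite size_cat.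
rewrite oddS; case: (odd k) IH => IH.
- have -> : alt (if ~~ true then 1 else 2) (if ~~ true then 2 else 1) k.+3 ++ [:: 0; 2]
     = [:: 2; 1] ++ (2 :: alt 1 2 k ++ [:: 0; 2]) by [].
  rewrite (@flip_catn 2 [:: 2; 1]) //.
  have -> : rev [:: 2; 1] ++ 2 :: alt 1 2 k ++ [:: 0; 2] = [:: 1] ++ 2 :: 2 :: (alt 1 2 k ++ [:: 0; 2]) by [].
  rewrite normalize_xx_id //.
  have -> : [:: 1] ++ 2 :: (alt 1 2 k ++ [:: 0; 2]) = alt 1 2 k.+2 ++ [:: 0; 2] by [].
  by apply: normalized_altcat => //=; case: (odd k).
- have -> : alt (if ~~ false then 1 else 2) (if ~~ false then 2 else 1) k.+3 ++ [:: 0; 2]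
     = [:: 1; 2] ++ (1 :: alt 2 1 k ++ [:: 0; 2]) by [].
  rewrite (@flip_catn 2 [:: 1; 2]) //.
  have -> : rev [:: 1; 2] ++ 1 :: alt 2 1 k ++ [:: 0; 2] = [:: 2] ++ 1 :: 1 :: (alt 2 1 k ++ [:: 0; 2]) by [].
  rewrite normalize_xx_id //.
  have -> : [:: 2] ++ 1 :: (alt 2 1 k ++ [:: 0; 2]) = alt 2 1 k.+2 ++ [:: 0; 2] by [].
  by apply: normalized_altcat => //=; case: (odd k).
Qed.

Lemma Qchain k : reach_in k
  ((if odd k then 2 else 0) :: 1 :: alt (if odd k then 0 else 2) (if odd k then 2 else 0) k.+1) [:: 0; 1; 2].
Proof.
elim: k => [//|k IH].
exists 3; split; first by [].
rewrite oddS; case: (odd k) IH => IH.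
- have -> : (if ~~ true then 2 else 0) :: 1 :: alt (if ~~ true then 0 else 2) (if ~~ true then 2 else 0) k.+2
     = [:: 0; 1; 2] ++ (0 :: alt 2 0 k) by [].
  rewrite (@flip_catn 3 [:: 0; 1; 2]) //.
  have -> : rev [:: 0; 1; 2] ++ 0 :: alt 2 0 k = [:: 2; 1] ++ 0 :: 0 :: alt 2 0 k by [].
  rewrite normalize_xx_id //.
  apply/andP; split => //; exact: (@normalized_cons_alt 1 0 2 k).
- have -> : (if ~~ false then 2 else 0) :: 1 :: alt (if ~~ false then 0 else 2) (if ~~ false then 2 else 0) k.+2
     = [:: 2; 1; 0] ++ (2 :: alt 0 2 k) by [].
  rewrite (@flip_catn 3 [:: 2; 1; 0]) //.
  have -> : rev [:: 2; 1; 0] ++ 2 :: alt 0 2 k = [:: 0; 1] ++ 2 :: 2 :: alt 0 2 k by [].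
  rewrite normalize_xx_id //.
  apply/andP; split => //; exact: (@normalized_cons_alt 1 2 0 k).
Qed.

Lemma size_alt a b k : size (alt a b k) = k.
Proof. by elim: k a b => //= k IH a b; rewrite IH. Qed.

Lemma F1 k : odd k -> 2 < k -> reach_in k (0 :: alt 1 2 k.+1) [:: 0; 1; 2].
Proof.
case: k => [//|[//|j]] ok j0.
have oj : odd j by move: ok; rewrite !oddS negbK.
exists j.+3; split; first by rewrite /= size_alt.
have -> : 0 :: alt 1 2 j.+3 = (0 :: alt 1 2 j.+2) ++ [:: 2].
  by rewrite alt_rcons -cats1 !oddS negbK oj.
rewrite (@flip_catn j.+3 (0 :: alt 1 2 j.+2)); last by rewrite /= size_alt.
rewrite rev_cons rev_alt_odd; last by rewrite !oddS negbK.
rewrite cat_rcons normalize_id; last first.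
  by apply: normalized_altcat => //; case: (odd j.+1).
by have := Pchain j; rewrite oj.
Qed.

Lemma F2 k : ~~ odd k -> 3 < k -> reach_in k (0 :: alt 2 1 k.+1) [:: 0; 1; 2].
Proof.
case: k => [//|[//|[//|j]]] ok j0.
have oj : odd j by move: ok; rewrite !oddS !negbK.
exists 2; split; first by [].
rewrite (@flip_catn 2 [:: 0; 2] (alt 1 2 j.+3)) // normalize_id; last first.
  by apply/andP; split => //; apply: (@normalized_cons_alt 0 1 2 j.+2).
exists j.+4; split; first by rewrite /= size_alt.
have -> : rev [:: 0; 2] ++ alt 1 2 j.+3 = (2 :: 0 :: alt 1 2 j.+2) ++ [:: 2].
  by rewrite alt_rcons -cats1 !oddS negbK oj.
rewrite (@flip_catn j.+4 (2 :: 0 :: alt 1 2 j.+2)); last by rewrite /= size_alt.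
rewrite (rev_cons 2) (rev_cons 0) rev_alt_odd; last by rewrite !oddS negbK.
have -> : rcons (rcons (alt 1 2 j.+2) 0) 2 ++ [:: 2] = (alt 1 2 j.+2 ++ [:: 0]) ++ 2 :: 2 :: [::].
  by rewrite -!cats1 -!catA.
rewrite normalize_xx_id; last first.
  by rewrite -catA; apply: normalized_altcat => //; case: (odd j.+1).
by rewrite -catA; have := Pchain j; rewrite oj.
Qed.

Lemma F3 k : odd k -> reach_in k (1 :: alt 0 2 k.+1) [:: 0; 1; 2].
Proof.
case: k => [//|j] ok.
have oj : odd j = false by move: ok; rewrite oddS => /negbTE.
exists 2; split; first by [].
rewrite (@flip_catn 2 [:: 1; 0] (alt 2 0 j.+1)) // normalize_id; last first.
  by apply/andP; split => //; apply: (@normalized_cons_alt 1 2 0 j).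
by have := Qchain j; rewrite oj.
Qed.

Lemma F4 k : ~~ odd k -> 0 < k -> reach_in k (1 :: alt 2 0 k.+1) [:: 0; 1; 2].
Proof.
case: k => [//|j] ok _.
have oj : odd j by move: ok; rewrite oddS negbK.
exists 2; split; first by [].
rewrite (@flip_catn 2 [:: 1; 2] (alt 0 2 j.+1)) // normalize_id; last first.
  by apply/andP; split => //; apply: (@normalized_cons_alt 1 0 2 j).
by have := Qchain j; rewrite oj.
Qed.

Lemma norm_cat a b : normalized (a ++ b) =
  [&& normalized a, normalized b & ((a == [::]) || (b == [::]) || (last 0 a != head 0 b))].
Proof.
case: a => [|x a] /=; first by case: (normalized b).
rewrite cat_path; case: b => [|y b] /=; first by rewrite !andbT.
by case: (path _ x a); case: (_ != _); case: (path _ y b).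
Qed.

Lemma normalized_rev u : normalized (rev u) = normalized u.
Proof.
rewrite /normalized rev_sorted; case: u => //= x u; apply: eq_path => a b; by rewrite /= eq_sym.
Qed.

Lemma last_rev0 u : last 0 (rev u) = head 0 u.
Proof. by case: u => [|y u] //; rewrite rev_cons last_rcons. Qed.

Lemma flip_reduce x u r : normalized (x :: u ++ x :: r) ->
  flip (size u).+1 (x :: u ++ x :: r) = rev u ++ x :: r /\ normalized (rev u ++ x :: r).
Proof.
move=> H.
have Hn : normalized (rev u ++ x :: r).
  move: (H); rewrite -cat1s norm_cat => /and3P [_ H1 _].
  case: u H H1 => [//|y u] H.
  rewrite (norm_cat (y :: u)) => /and3P [Hu Hr _].
  move: (H) => /andP [xy _].
  rewrite norm_cat normalized_rev Hu Hr /= last_rev0 /=.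
  by rewrite (eq_sym y) xy orbT.
split => //.
rewrite (@flip_catn (size u).+1 (x :: u) (x :: r)) //.
rewrite rev_cons -cats1 -catA /=.
exact: normalize_xx_id.
Qed.

Definition fullb (s : seq nat) : bool :=
  [&& all (fun x => x < 3) s, 0 \in s, 1 \in s & 2 \in s].

Lemma fullyP s : fully_kary 3 s -> fullb s.
Proof.
move=> H; rewrite /fullb !H /= andbT; apply/allP => z; by rewrite H.
Qed.

Lemma fullb_eq a b : a =i b -> fullb a = fullb b.
Proof. by move=> E; rewrite /fullb (eq_all_r E) !E. Qed.

Fixpoint enum_s n : seq (seq nat) :=
  if n is n'.+1 then flatten [seq [seq x :: t | t <- enum_s n'] | x <- [:: 0; 1; 2]] else [:: [::]].

Lemma enum_sP s : all (fun x => x < 3) s -> s \in enum_s (size s).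
Proof.
elim: s => [//|x s IH]; rewrite [all _ _]/= => /andP [x3 H].
change (x :: s \in flatten [seq [seq y :: t | t <- enum_s (size s)] | y <- [:: 0; 1; 2]]).
apply/flatten_mapP; exists x; first by case: x x3 => [|[|[|]]].
by apply: map_f; apply: IH.
Qed.

Definition okb s := (normalized s && fullb s && (last 0 s == 2) && (s != [:: 0; 2; 1; 2])) ==>
  has (fun k => reachb k s [:: 0; 1; 2]) (iota 0 (size s - 1)).

Lemma base_check : all (fun n => all okb (enum_s n)) (iota 0 6).
Proof. vm_compute. reflexivity. Qed.

Lemma base s : size s <= 5 -> normalized s -> fullb s -> last 0 s = 2 -> s != [:: 0; 2; 1; 2] ->
  exists k, k <= size s - 2 /\ reach_in k s [:: 0; 1; 2].
Proof.
move=> s5 ns fs ls ne.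
have Hm : s \in enum_s (size s) by apply: enum_sP; case/and4P: fs.
have := base_check => /allP /(_ (size s)); rewrite mem_iota add0n ltnS => /(_ s5).
move=> /allP /(_ s Hm); rewrite /okb ns fs ls eqxx ne /= => /hasP [k].
rewrite mem_iota add0n => kl /reachbP Hk; exists k; split => //; lia.
Qed.

Lemma tail_alt a b t : a != b -> normalized (a :: t) -> all (fun z => (z == a) || (z == b)) t ->
  a :: t = alt a b (size t).+1.
Proof.
elim: t a b => [//|c t IH] a b ab /= /andP [ac nt] /andP [cab H].
have cb : c = b by move: cab ac; case: eqP => [->|_] /=; [rewrite eqxx | move/eqP].
subst c; congr (_ :: _); apply: IH => //; first by rewrite eq_sym.
by apply: sub_all H => z; rewrite orbC.
Qed.

Lemma key N : forall s, size s <= N -> normalized s -> fullb s -> last 0 s = 2 ->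
  s != [:: 0; 2; 1; 2] -> exists k, k <= size s - 2 /\ reach_in k s [:: 0; 1; 2].
Proof.
elim: N => [|N IH] s sN ns fs ls ne; first by apply: base => //; lia.
have [s5|s6] := leqP (size s) 5; first exact: base.
case: s sN ns fs ls ne s6 => [//|x t] sN ns fs ls ne s6.
case: (boolP (x \in t)) => xt.
  case/splitPr: xt ns fs ls ne sN s6 => u r ns fs ls ne sN s6.
  have [F N'] := flip_reduce ns.
  have E : rev u ++ x :: r =i x :: u ++ x :: r.
    move=> z; rewrite !(mem_cat, in_cons, mem_rev).
    by case: (z == x); case: (z \in u); case: (z \in r).
  have S : size (rev u ++ x :: r) = (size (u : seq nat) + size (r : seq nat)).+1 by rewrite size_cat size_rev /= addnS.
  have Ssz : size (x :: u ++ x :: r) = (size (u : seq nat) + size (r : seq nat)).+2 by rewrite /= size_cat /= addnS.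
  have [k [kb Hk]] : exists k, k <= size (rev u ++ x :: r) - 2 /\ reach_in k (rev u ++ x :: r) [:: 0; 1; 2].
    have c1 : size (rev u ++ x :: r) <= N by move: sN; rewrite S Ssz; lia.
    have c2 : fullb (rev u ++ x :: r) by rewrite (fullb_eq E).
    have c3 : last 0 (rev u ++ x :: r) = 2 by move: ls; rewrite /= !last_cat.
    have c4 : rev u ++ x :: r != [:: 0; 2; 1; 2].
      apply/eqP => E2; move: S; rewrite E2 /= => -[S4]; move: s6; rewrite Ssz -S4.
      by [].
    exact: IH.
  exists k.+1; split; first by move: kb s6; rewrite S Ssz; lia.
  exists (size u).+1; split; first by rewrite Ssz ltnS; apply: leq_trans (leq_addr _ _) (leqnSn _).
  by rewrite F.
have [a3 H0 H1 H2] : [/\ all (fun z => z < 3) (x :: t), 0 \in x :: t, 1 \in x :: t & 2 \in x :: t].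
  by apply/and4P.
have t2 : 2 \in t.
  case: t ls s6 {H0 H1 H2 xt a3 sN ns ne fs} => [//|y t] /= ls _.
  by rewrite -ls; apply: mem_last.
have x3 : x < 3 by case/andP: a3.
have x2 : x != 2 by apply: contraNneq xt => ->.
have allt : forall z, z \in t -> z < 3 /\ z != x.
  move=> z zt; split; first by move/allP: a3; apply; rewrite in_cons zt orbT.
  by apply: contraNneq xt => <-.
case: t ns ls s6 t2 xt allt {H0 H1 H2 a3 fs sN ne} => [//|a t'] ns ls s6 t2 xt allt.
have nat' : normalized (a :: t') := path_sorted ns.
have [a3 ax] := allt a (mem_head _ _).
have allt' : forall z, z \in t' -> z < 3 /\ z != x.
  by move=> z zt; apply: allt; rewrite in_cons zt orbT.
have s4 : 3 < size t' by move: s6 => /=; lia.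
clear s6.
case: x x3 x2 ns ls xt allt allt' ax => [|[|[|//]]] _ x2 ns ls xt allt allt' ax;
  case: a a3 ax ns ls t2 xt allt nat' => [|[|[|//]]] _ ax ns ls t2 xt allt nat' //.
all: try by move: ax; rewrite eqxx.
all: try by move: x2; rewrite eqxx.
- have Hall : all (fun z => (z == 1) || (z == 2)) t'.
    by apply/allP => z /allt' [z3 zx]; case: z z3 zx => [|[|[|]]].
  have E := tail_alt (a := 1) (b := 2) isT nat' Hall.
  rewrite E in ls *; change (last 0 (alt 1 2 (size t').+1) = 2) in ls; rewrite last_alt in ls.
  exists (size t'); split; first by rewrite /= size_alt subn2.
  by apply: F1; [move: ls; case: odd | lia].
- have Hall : all (fun z => (z == 2) || (z == 1)) t'.
    by apply/allP => z /allt' [z3 zx]; case: z z3 zx => [|[|[|]]].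
  have E := tail_alt (a := 2) (b := 1) isT nat' Hall.
  rewrite E in ls *; change (last 0 (alt 2 1 (size t').+1) = 2) in ls; rewrite last_alt in ls.
  exists (size t'); split; first by rewrite /= size_alt subn2.
  by apply: F2; [move: ls; case: odd | lia].
- have Hall : all (fun z => (z == 0) || (z == 2)) t'.
    by apply/allP => z /allt' [z3 zx]; case: z z3 zx => [|[|[|]]].
  have E := tail_alt (a := 0) (b := 2) isT nat' Hall.
  rewrite E in ls *; change (last 1 (alt 0 2 (size t').+1) = 2) in ls; rewrite last_alt in ls.
  exists (size t'); split; first by rewrite /= size_alt subn2.
  by apply: F3; move: ls; case: odd.
- have Hall : all (fun z => (z == 2) || (z == 0)) t'.
    by apply/allP => z /allt' [z3 zx]; case: z z3 zx => [|[|[|]]].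
  have E := tail_alt (a := 2) (b := 0) isT nat' Hall.
  rewrite E in ls *; change (last 1 (alt 2 0 (size t').+1) = 2) in ls; rewrite last_alt in ls.
  exists (size t'); split; first by rewrite /= size_alt subn2.
  by apply: F4; [move: ls; case: odd | lia].
Qed.

Theorem lemma4p2 (s : seq nat) :
  normalized s -> fully_kary 3 s -> last 0 s = 2 -> s != [:: 0; 2; 1; 2] ->
  exists d : nat, sorting_distance 3 s d /\ d <= size s - 2.
Proof.
move=> ns /fullyP fs ls ne.
have [k [kb Hk]] := key (leqnn (size s)) ns fs ls ne.
have ex : exists k, reachb k s [:: 0; 1; 2] by exists k; apply/reachbP.
exists (ex_minn ex); case: ex_minnP => d /reachbP Hd dmin.
split; last by apply: leq_trans (dmin k _) kb; apply/reachbP.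
split => // d' /reachbP; exact: dmin.
Qed.
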